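(* Let $V$ be a finite-dimensional vector space with a direct sum decomposition $V=V(1)\oplus\cdots\oplus V(l)$ and a flag of subspaces $V=\mathcal F^0V\supseteq\mathcal F^1V\supseteq\cdots\supseteq\mathcal F^mV=\{0\}$, $l,m\ge1$. Let $n=\dim V$ and for $1\le i\le n$ let $f(i)=\max\{k\ge0: i\le\dim\mathcal F^kV\}$. Then there exist bases $(x_i)_{1\le i\le n}$ and $(b_i)_{1\le i\le n}$ of $V$ and an upper triangular matrix $S=(s_{ij})\in k^{n\times n}$ with all diagonal entries $1$ such that: (1) for each $i$ there is $1\le g(i)\le l$ with $x_i\in V(g(i))$; (2) for each $0\le k\le m-1$, the vectors $b_i$ with $1\le i\le\dim\mathcal F^kV$ form a basis of $\mathcal F^kV$; (3) for all $1\le i\le n$, $b_i=x_i+\sum_{j>i}s_{ij}x_j=x_i+\sum_{j:\,f(j)<f(i),\,g(j)\ne g(i)}s_{ij}x_j$.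
   Context: $k$ denotes the ground field. *)

(* Defs.v *)
From HB Require Import structures.
From mathcomp Require Import all_boot all_order all_algebra.
Set Implicit Arguments. Unset Strict Implicit. Unset Printing Implicit Defensive.
Import GRing.Theory.
Local Open Scope ring_scope.

(* f(i) = max { k : i <= dim F^k V }, the maximum taken over 0 <= k <= m
   (the flag is only given for 0 <= k <= m). Here i is 1-based (a nat). *)
Definition flag_level (K : fieldType) (V : vectType K)
  (F : nat -> {vspace V}) (m i : nat) : nat :=
  \max_(k < m.+1 | (i <= \dim (F k))%N) (k : nat).

(* Main.v *)
Require Import Defs.
From HB Require Import structures.
From mathcomp Require Import all_boot all_order all_algebra.
From mathcomp Require Import zify.
Import GRing.Theory.
Local Open Scope ring_scope.

Lemma greedy (K : fieldType) (V : vectType K) (T : eqType) (L : seq (T * V))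
  (A : {vspace V}) :
  exists L', {subset L' <= L} /\ (A + <<map snd L'>> = A + <<map snd L>>)%VS /\
    (\dim A + size L' = \dim (A + <<map snd L>>))%N.
Proof.
elim: L A => [|[t y] L IH] A.
  by exists [::]; split => //; split => //; rewrite /= span_nil addv0 addn0.
have [yA | yA] := boolP (y \in A).
  have [L' [sub [e d]]] := IH A.
  have E : (A + <<map snd ((t, y) :: L)>> = A + <<map snd L>>)%VS.
    by rewrite /= span_cons addvA (addv_idPl yA).
  exists L'; rewrite E; split => //.
  by move=> z /sub zL; rewrite inE zL orbT.
have [L' [sub [e d]]] := IH (A + <[y]>)%VS.
exists ((t, y) :: L'); split.
  by move=> z; rewrite !inE => /orP[->//|/sub ->]; rewrite orbT.
rewrite /= !span_cons !addvA e; split => //.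
have cap : (A :&: <[y]> = 0)%VS.
  apply/eqP; rewrite -subv0; apply/subvP => z /memv_capP [zA /vlineP [c zc]].
  rewrite memv0 zc scaler_eq0; case: (c =P 0) => //= /eqP c0.
  case/negP: yA; have -> : y = c^-1 *: z by rewrite zc scalerA mulVf // scale1r.
  exact: memvZ.
have y0 : y != 0 by apply: contraNneq yA => ->; exact: mem0v.
by rewrite -d dimv_disjoint_sum // dim_vline y0 addnS addn1.
Qed.

Lemma seq_choice (A B : eqType) (P : A -> B -> Prop) (s : seq A) :
  (forall a, a \in s -> exists b, P a b) ->
  exists t : seq (A * B), map fst t = s /\ forall p, p \in t -> P p.1 p.2.
Proof.
elim: s => [|a s IH] H; first by exists [::].
have [b Pb] := H a (mem_head _ _).
have [t [e Pt]] : exists t : seq (A * B), map fst t = s /\ forall p, p \in t -> P p.1 p.2.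
  by apply: IH => a' h; apply: H; rewrite inE h orbT.
exists ((a, b) :: t); split; first by rewrite /= e.
by move=> p; rewrite inE => /orP[/eqP->//|/Pt].
Qed.

Lemma span_coefs (K : fieldType) (V : vectType K) n (f : 'I_n -> V)
  (P : pred 'I_n) v :
  v \in <<[seq f j | j <- enum 'I_n & P j]>>%VS ->
  exists c : 'I_n -> K, v = \sum_(j | P j) c j *: f j.
Proof.
rewrite span_def big_map big_filter big_enum_cond /=.
move/memv_sumP => [vs Hvs ->].
have : forall j, exists c : K, P j -> vs j = c *: f j.
  move=> j; case Pj: (P j); last by exists 0.
  by have /vlineP[c ->] := Hvs j Pj; exists c.
move/fin_all_exists => [c Hc]; exists c.
by apply: eq_bigr => j Pj; exact: Hc.
Qed.


Definition itT {K : fieldType} (V : vectType K) (l : nat) := (((V * V) * 'I_l) * nat)%type.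
Definition ix {K : fieldType} {V : vectType K} {l} (it : itT V l) : V := it.1.1.1.
Definition ib {K : fieldType} {V : vectType K} {l} (it : itT V l) : V := it.1.1.2.
Definition ig {K : fieldType} {V : vectType K} {l} (it : itT V l) : 'I_l := it.1.2.
Definition ilev {K : fieldType} {V : vectType K} {l} (it : itT V l) : nat := it.2.

Definition Inv {K : fieldType} {V : vectType K} {l : nat} (Vs : 'I_l -> {vspace V})
  (F : nat -> {vspace V}) (k : nat) (its : seq (itT V l)) : Prop :=
  [/\ size its = (\dim (fullv : {vspace V}) - \dim (F k))%N,
      (<<map ix its>> + F k = fullv)%VS,
      (forall it0 p, (p < size its)%N ->
         (ilev (nth it0 its p) < k)%N /\
         (\dim (F (ilev (nth it0 its p)).+1) <= p + \dim (F k))%N /\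
         (p + \dim (F k) < \dim (F (ilev (nth it0 its p))))%N),
      (forall it, it \in its -> (ix it \in Vs (ig it)) /\ (ib it \in F (ilev it)) /\ (ilev it < k)%N) &
      (forall it, it \in its -> ib it - ix it \in
         <<[seq ix it' | it' <- its & (ilev it' < ilev it)%N && (ig it' != ig it)]>>%VS)].

Lemma Inv0 (K : fieldType) (V : vectType K) (l : nat) (Vs : 'I_l -> {vspace V})
  (F : nat -> {vspace V}) : F 0%N = fullv -> Inv Vs F 0 [::].
Proof. by move=> F0; split => //=; rewrite ?F0 ?subnn // span_nil add0v. Qed.


Lemma step (K : fieldType) (V : vectType K) (l m : nat) (Vs : 'I_l -> {vspace V})
  (F : nat -> {vspace V}) (k : nat) (its : seq (itT V l)) :
  (\sum_(i < l) Vs i)%VS = fullv ->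
  (forall k, (k < m)%N -> (F k.+1 <= F k)%VS) -> (k < m)%N ->
  Inv Vs F k its -> exists its', Inv Vs F k.+1 its'.
Proof.
move=> HVs HF hk [Ha Hb Hc Hd Hf].
set n := \dim (fullv : {vspace V}).
set W := <<map ix its>>%VS.
have dkn : (\dim (F k) <= n)%N by apply: dimvS; apply: subvf.
have dk1 : (\dim (F k.+1) <= \dim (F k))%N by apply: dimvS; apply: HF.
have dimW : \dim W = (n - \dim (F k))%N.
  apply/eqP; rewrite eqn_leq; apply/andP; split.
    by have := dim_span (map ix its); rewrite size_map Ha.
  have := (dimv_add_leqif W (F k)).1; rewrite Hb -/n; lia.
have capW : (W :&: F k <= 0)%VS.
  rewrite -(dimv_add_leqif W (F k)).2 Hb -/n dimW; apply/eqP; lia.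
have capW1 : (W :&: F k.+1 = 0)%VS.
  by apply/eqP; rewrite -subv0; apply: subv_trans capW; apply: capvS => //; apply: HF.
set A := (W + F k.+1)%VS.
have dimA : \dim A = (n - \dim (F k) + \dim (F k.+1))%N.
  by rewrite /A dimv_disjoint_sum // dimW.
pose Wng (g : 'I_l) := <<[seq ix it | it <- its & ig it != g]>>%VS.
pose Wg (g : 'I_l) := <<[seq ix it | it <- its & ig it == g]>>%VS.
pose U (g : 'I_l) := ((F k + Wng g) :&: Vs g)%VS.
have WgV g : (Wg g <= Vs g)%VS.
  apply/span_subvP => z /mapP [it]; rewrite mem_filter => /andP [/eqP <- itin] ->.
  by have [] := Hd it itin.
have WgW g : (Wg g <= W)%VS.
  by apply: sub_span => z /mapP [it]; rewrite mem_filter => /andP [_ itin] ->; apply: map_f.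
have Wsplit g : (W <= Wg g + Wng g)%VS.
  rewrite -span_cat; apply: sub_span => z /mapP [it itin ->]; rewrite mem_cat.
  case E: (ig it == g); apply/orP; [left|right]; apply: map_f; by rewrite mem_filter ?E.
have Cl1 g : (Vs g <= Wg g + U g)%VS.
  apply/subvP => v vV.
  have : v \in (W + F k)%VS by rewrite Hb memvf.
  move/memv_addP => [w /(subvP (Wsplit g)) /memv_addP [w1 w1W [w2 w2W ->]] [f fF hv]].
  have -> : v = w1 + (v - w1) by rewrite addrC subrK.
  apply: memv_add => //; apply/memv_capP; split.
    have -> : v - w1 = f + w2.
      by rewrite hv (addrC (w1 + w2 + f)) -(addrA w1) addKr addrC.
    exact: memv_add.
  by apply: memvB => //; apply: (subvP (WgV g)).
have Cl2 : (fullv <= W + \sum_(g < l) U g)%VS.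
  rewrite -HVs; apply/subv_sumP => g _; apply: subv_trans (Cl1 g) _.
  by apply: addvS => //; apply: (sumv_sup g).
pose L := flatten [seq [seq (g, y) | y <- vbasis (U g)] | g <- enum 'I_l].
have HL p : p \in L -> p.2 \in U p.1.
  move/flattenP => [s /mapP [g _ ->] /mapP [y yb ->]] /=; exact: vbasis_mem.
have SL : (\sum_(g < l) U g <= <<map snd L>>)%VS.
  apply/subv_sumP => g _; rewrite -(span_basis (vbasisP (U g))).
  apply: sub_span => y yb; apply/mapP; exists (g, y) => //.
  apply/flattenP; exists [seq (g, y) | y <- vbasis (U g)]; last exact: map_f.
  by apply: map_f; rewrite mem_enum.
have [L' [subL [eL dL]]] := @greedy _ _ _ L A.
have AL : (A + <<map snd L>> = fullv)%VS.
  apply: subv_anti; rewrite subvf /=; apply: subv_trans Cl2 _.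
  rewrite /A -addvA; apply: addvS => //; apply: subv_trans SL _; exact: addvSr.
rewrite AL -/n dimA in dL; rewrite AL in eL.
have [t [et Pt]] : exists t : seq (('I_l * V) * V), map fst t = L' /\
    forall p, p \in t -> (p.2 \in F k) /\ (p.1.2 - p.2 \in Wng p.1.1).
  apply: (@seq_choice _ _ (fun a b => (b \in F k) /\ (a.2 - b \in Wng a.1))) => p /subL /HL /memv_capP [/memv_addP [f fF [w wW ->]] _].
  by exists f; split => //; rewrite [f + w]addrC addrK.
pose new := [seq ((p.1.2, p.2, p.1.1, k) : itT V l) | p <- t].
have sznew : size new = size L' by rewrite size_map -et size_map.
have Hnew it : it \in new -> [/\ ix it \in Vs (ig it), ib it \in F (ilev it),
    ilev it = k & ib it - ix it \in Wng (ig it)].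
  move=> /mapP [p pt ->]; rewrite /ix /ib /ig /ilev /=.
  have [p2F p12W] := Pt p pt.
  have : p.1 \in L' by rewrite -et; apply: map_f.
  move/subL/HL/memv_capP => [_ ->]; split => //.
  by rewrite -opprB memvN.
exists (new ++ its); split.
- rewrite size_cat sznew Ha; lia.
- rewrite map_cat span_cat.
  have -> : map ix new = map snd L' by rewrite -et -!map_comp.
  by rewrite -addvA addvC.
- move=> it0 p; rewrite size_cat nth_cat sznew => hp.
  case: ifP => hp1.
    have : nth it0 new p \in new by apply: mem_nth; rewrite sznew.
    case/Hnew => _ _ -> _; lia.
  have hq : (p - size L' < size its)%N by lia.
  have [h1 [h2 h3]] := Hc it0 _ hq; lia.
- move=> it; rewrite mem_cat => /orP [/Hnew [h1 h2 lk _] | itin].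
    by rewrite -lk; split => //; split => //; rewrite lk.
  by have [? [? ?]] := Hd it itin; split => //; split => //; lia.
- move=> it; rewrite mem_cat => /orP [itn | itin].
    have [_ _ lk hW] := Hnew it itn; rewrite lk.
    apply: (subvP _ _ hW); apply: sub_span => z /mapP [it' ].
    rewrite mem_filter => /andP [hg itin] ->; apply: map_f.
    rewrite mem_filter hg mem_cat itin orbT andbT.
    by have [_ [_ ->]] := Hd it' itin.
  apply: (subvP _ _ (Hf it itin)); apply: sub_span => z /mapP [it'].
  rewrite mem_filter => /andP [hg itin'] ->; apply: map_f.
  by rewrite mem_filter hg mem_cat itin' orbT.
Qed.


Lemma Fmono (K : fieldType) (V : vectType K) (F : nat -> {vspace V}) (m : nat) :
  (forall k, (k < m)%N -> (F k.+1 <= F k)%VS) ->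
  forall k L, (k <= L)%N -> (L <= m)%N -> (F L <= F k)%VS.
Proof.
move=> HF k L; elim: L => [|L IH]; first by rewrite leqn0 => /eqP->.
rewrite leq_eqVlt => /orP[/eqP->//|kL1] Lm.
exact: subv_trans (HF L Lm) (IH kL1 (ltnW Lm)).
Qed.

Lemma map_nth_enum (T U : Type) (d : T) (s : seq T) (f : T -> U) n :
  size s = n -> [seq f (nth d s i) | i : 'I_n <- enum 'I_n] = map f s.
Proof.
move=> <-; have -> : map f s = map f (mkseq (nth d s) (size s)) by rewrite mkseq_nth.
by rewrite /mkseq -val_enum_ord -!map_comp.
Qed.

Lemma count_ord_lt n d : (d <= n)%N ->
  count (fun i : 'I_n => (i < d)%N) (enum 'I_n) = d.
Proof.
move=> dn; rewrite -(count_map val (fun i => (i < d)%N)) val_enum_ord.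
by rewrite -size_filter (filter_iota_ltn 0 dn) size_iota.
Qed.

Lemma reach (K : fieldType) (V : vectType K) (l m : nat) (Vs : 'I_l -> {vspace V})
  (F : nat -> {vspace V}) :
  (\sum_(i < l) Vs i)%VS = fullv -> F 0%N = fullv ->
  (forall k, (k < m)%N -> (F k.+1 <= F k)%VS) ->
  forall k, (k <= m)%N -> exists its, Inv Vs F k its.
Proof.
move=> HVs F0 HF; elim => [|k IH] hk; first by exists [::]; apply: Inv0.
have [its I] := IH (ltnW hk).
exact: (@step _ _ _ _ _ _ _ _ HVs HF hk I).
Qed.


Theorem mainTheorem16 (K : fieldType) (V : vectType K) (l m : nat)
  (Vs : 'I_l -> {vspace V}) (F : nat -> {vspace V}) :
  (1 <= l)%N -> (1 <= m)%N ->
  (\sum_(i < l) Vs i)%VS = fullv -> directv (\sum_(i < l) Vs i) ->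
  F 0%N = fullv -> F m = 0%VS -> (forall k, (k < m)%N -> (F k.+1 <= F k)%VS) ->
  let n := \dim (fullv : {vspace V}) in
  exists (x b : 'I_n -> V) (S : 'M[K]_n) (g : 'I_n -> 'I_l),
    [/\ basis_of fullv [seq x i | i <- enum 'I_n] /\
        basis_of fullv [seq b i | i <- enum 'I_n],
        (forall i j : 'I_n, (j < i)%N -> S i j = 0) /\ (forall i : 'I_n, S i i = 1),
        (forall i : 'I_n, x i \in Vs (g i)),
        (forall k, (k < m)%N ->
           basis_of (F k) [seq b i | i : 'I_n <- enum 'I_n & (i < \dim (F k))%N]) &
        (forall i : 'I_n,
           b i = x i + \sum_(j : 'I_n | (i < j)%N) S i j *: x j /\
           b i = x i + \sum_(j : 'I_n | (flag_level F m j.+1 < flag_level F m i.+1)%N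
                                        && (g j != g i)) S i j *: x j)].
Proof.
move=> hl hm HVs _ F0 Fm HF n.
have [its [Ha Hb Hc Hd Hf]] := @reach _ _ _ _ _ _ HVs F0 HF _ (leqnn m).
set d := fun k => \dim (F k).
have dm : d m = 0%N by rewrite /d Fm dimv0.
rewrite Fm addv0 in Hb.
have szits : size its = n by rewrite Ha -/(d m) dm subn0.
have dmono k L : (k <= L)%N -> (L <= m)%N -> (d L <= d k)%N.
  by move=> kL Lm; apply: dimvS; apply: (@Fmono _ _ _ _ HF).
have dn k : (d k <= n)%N by apply: dimvS; apply: subvf.
pose it0 : itT V l := (0, 0, Ordinal hl, 0%N).
pose it (i : 'I_n) := nth it0 its i.
pose x i := ix (it i). pose b i := ib (it i). pose g i := ig (it i).
pose lev i := ilev (it i).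
have itin (i : 'I_n) : it i \in its by apply: mem_nth; rewrite szits.
have Hpos (i : 'I_n) : [/\ (lev i < m)%N, (d (lev i).+1 <= i)%N & (i < d (lev i))%N].
  have := Hc it0 i; rewrite szits ltn_ord -/(d m) dm !addn0 => /(_ isT) [h1 [h2 h3]].
  by split.
have levmono (i j : 'I_n) : (j < i)%N -> (lev i <= lev j)%N.
  move=> ji; have [hi1 hi2 hi3] := Hpos i; have [hj1 hj2 hj3] := Hpos j.
  rewrite leqNgt; apply/negP => lt.
  have := dmono _ _ lt (ltnW hi1); lia.
have fl (i : 'I_n) : flag_level F m i.+1 = lev i.
  have [h1 h2 h3] := Hpos i.
  apply/eqP; rewrite eqn_leq; apply/andP; split.
    apply/bigmax_leqP => k hk /=; rewrite leqNgt; apply/negP => lt.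
    have := dmono _ _ lt (ltnSE (ltn_ord k)); rewrite /d in h2 *; lia.
  have := @leq_bigmax_cond _ (fun k : 'I_m.+1 => (i < \dim (F k))%N) (fun k : 'I_m.+1 => k : nat) (@Ordinal m.+1 (lev i) (leq_trans h1 (leqnSn m))) h3; by [].
have Hspan (i : 'I_n) : b i - x i \in
    <<[seq x j | j : 'I_n <- enum 'I_n & (lev j < lev i)%N && (g j != g i)]>>%VS.
  apply: (subvP _ _ (Hf _ (itin i))); apply: sub_span => z /mapP [it'].
  rewrite mem_filter => /andP [hc it'in] ->.
  have hj : (index it' its < n)%N by rewrite -szits index_mem.
  have e : it (Ordinal hj) = it' by rewrite /it /= nth_index.
  apply/mapP; exists (Ordinal hj); last by rewrite /x e.
  by rewrite mem_filter mem_enum andbT /lev /g e.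
have [C HC] := fin_all_exists (fun i => @span_coefs _ _ _ x _ _ (Hspan i)).
pose S := \matrix_(i, j) (if i == j then 1 else
            if (lev j < lev i)%N && (g j != g i) then C i j else 0 : K).
have eX : [seq x i | i <- enum 'I_n] = map ix its by exact: map_nth_enum.
have Bk : forall k, (k < m)%N ->
    basis_of (F k) [seq b i | i : 'I_n <- enum 'I_n & (i < \dim (F k))%N].
  move=> k hk.
  set Bs := [seq b i | i : 'I_n <- enum 'I_n & (i < \dim (F k))%N].
  set Ws := [seq x i | i : 'I_n <- enum 'I_n & ~~ (i < \dim (F k))%N].
  have levk (i : 'I_n) : (i < d k)%N -> (k <= lev i)%N.
    move=> hi; have [h1 h2 h3] := Hpos i; rewrite leqNgt; apply/negP => lt.
    have := dmono _ _ lt (ltnW hk); lia.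
  have BF : (<<Bs>> <= F k)%VS.
    apply/span_subvP => z /mapP [i]; rewrite mem_filter => /andP [hi _] ->.
    have [_ [hb _]] := Hd _ (itin i); have [h1 _ _] := Hpos i.
    exact: (subvP (@Fmono _ _ _ _ HF k (lev i) (levk i hi) (ltnW h1))).
  have Xin : forall L (i : 'I_n), (lev i < L)%N -> x i \in (<<Bs>> + <<Ws>>)%VS.
    elim => [//|L IH] i hi.
    case hik: (i < d k)%N.
      have -> : x i = b i - (b i - x i) by rewrite opprB addrC subrK.
      apply: memvB.
        apply: (subvP (addvSl _ _)); apply: memv_span; apply: map_f.
        by rewrite mem_filter hik mem_enum.
      rewrite HC; apply: memv_suml => j hj; apply: memvZ; apply: IH.
      by move/andP: hj => [hj _]; lia.
    apply: (subvP (addvSr _ _)); apply: memv_span; apply: map_f.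
    by rewrite mem_filter hik mem_enum.
  have full : (fullv <= <<Bs>> + <<Ws>>)%VS.
    rewrite -Hb; apply/span_subvP => z; rewrite -eX => /mapP [i _ ->].
    exact: (Xin (lev i).+1 i (ltnSn _)).
  have szB : size Bs = d k by rewrite size_map size_filter count_ord_lt //; exact: dn.
  have szW : size Ws = (n - d k)%N.
    rewrite size_map size_filter.
    have := count_predC (fun i : 'I_n => (i < d k)%N) (enum 'I_n).
    rewrite count_ord_lt ?dn // size_enum_ord.
    have -> : count (fun i : 'I_n => ~~ (i < \dim (F k))%N) (enum 'I_n) =
      count (predC (fun i : 'I_n => (i < d k)%N)) (enum 'I_n) by [].
    lia.
  have h0 := dimvS full.
  have h1 := (dimv_add_leqif <<Bs>> <<Ws>>).1.
  have h2 := dim_span Ws.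
  have : <<Bs>>%VS == F k.
    rewrite eqEdim BF /=; move: h0 h1 h2 (dn k); rewrite szW -/n -/(d k); lia.
  by move/eqP; rewrite basisEdim szB leqnn andbT => ->.
exists x, b, S, g; split.
- split; first by rewrite basisEdim eX Hb subvv size_map szits leqnn.
  have := Bk 0%N hm; rewrite F0.
  have -> : [seq i : 'I_n <- enum 'I_n | (i < \dim (fullv : {vspace V}))%N] = enum 'I_n.
    by apply/all_filterP; apply/allP => i _; exact: ltn_ord.
  by [].
- split.
    move=> i j ji; rewrite mxE.
    have -> : (i == j) = false by apply/negbTE; apply: contraTneq ji => ->; rewrite ltnn.
    by rewrite ltnNge levmono.
  by move=> i; rewrite mxE eqxx.
- by move=> i; have [] := Hd _ (itin i).
- exact: Bk.
move=> i.
have E2 : \sum_(j : 'I_n | (flag_level F m j.+1 < flag_level F m i.+1)%N && (g j != g i))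
      S i j *: x j = b i - x i.
  rewrite HC; apply: eq_big => j; first by rewrite !fl.
  move=> /andP [hj hg]; rewrite !fl in hj; rewrite mxE.
  have -> : (i == j) = false by apply/negbTE; apply: contraTneq hj => ->; rewrite ltnn.
  by rewrite hj hg.
split; last by rewrite E2 addrC subrK.
suff -> : \sum_(j : 'I_n | (i < j)%N) S i j *: x j = b i - x i by rewrite addrC subrK.
rewrite HC big_mkcond [RHS]big_mkcond /=; apply: eq_bigr => j _; rewrite mxE.
case: eqP => [<-|ij]; first by rewrite ltnn /= ltnn.
case hc: ((lev j < lev i)%N && (g j != g i)).
  move/andP: hc => [hc _].
  have -> : (i < j)%N.
    rewrite ltnNge leq_eqVlt negb_or; apply/andP; split.
      by apply/eqP => e; apply: ij; apply: val_inj.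
    by apply/negP => /(levmono i j); rewrite leqNgt hc.
  by [].
by case: ifP => //; rewrite scale0r.
Qed.
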